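(* Let $m\ge1$, $q=2^m$, let $n$ be odd, and let $L$ and $\lambda$ be $2$-linear polynomials over $\mathbb F_{q^n}$ such that $L^\prime(\ker\mathrm{Tr})=\lambda^\prime(\ker\mathrm{Tr})=\ker\mathrm{Tr}$ and $\mathrm{Tr}(\lambda^\prime(x))=0$ for all $x\in\mathbb F_{q^n}$. Then both $\mathrm{Tr}(x^{q+1})+L(\lambda(x))$ and $\mathrm{Tr}(x^{q+1})+\lambda(L(x))$ are permutation polynomials of $\mathbb F_{q^n}$.
   Context: $\mathrm{Tr}$ denotes the trace map of $\mathbb F_{q^n}$ over $\mathbb F_q$. A $2$-linear polynomial over $\mathbb F_{q^n}$ has the form $\sum_{j=0}^{mn-1}a_jx^{2^j}$; its adjoint is $\sum_j(a_jx)^{2^{-j}}$, where $y\mapsto y^{2^{-j}}$ is the inverse of $y\mapsto y^{2^j}$ on $\mathbb F_{q^n}$. Polynomials are regarded as maps on $\mathbb F_{q^n}$. *)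

(* Defs.v *)
From HB Require Import structures.
From mathcomp Require Import all_boot all_order all_algebra all_field.
Set Implicit Arguments. Unset Strict Implicit. Unset Printing Implicit Defensive.
Import GRing.Theory.
Local Open Scope ring_scope.

(* Trace of F_{q^n} over F_q, q = 2^m, viewed as a map F -> F:
   Tr(x) = sum_{i<n} x^(q^i). *)
Definition trq {F : finFieldType} (m n : nat) (x : F) : F :=
  \sum_(i < n) x ^+ ((2 ^ m) ^ i).

Definition kerTr {F : finFieldType} (m n : nat) : {set F} :=
  [set x : F | trq m n x == 0].

Definition lin2 {F : finFieldType} (N : nat) (a : 'I_N -> F) (x : F) : F :=
  \sum_(j < N) a j * x ^+ (2 ^ j).

(* its adjoint  sum_j (a_j x)^(2^{-j}), where y |-> y^(2^{-j}) is the inverse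
   of y |-> y^(2^j) on F (|F| = 2^N), i.e. y |-> y^(2^(N-j)) *)
Definition adj2 {F : finFieldType} (N : nat) (a : 'I_N -> F) (x : F) : F :=
  \sum_(j < N) (a j * x) ^+ (2 ^ (N - j)).

(* Main.v *)
Require Import Defs.
From HB Require Import structures.
From mathcomp Require Import all_boot all_order all_algebra all_field.
From mathcomp Require Import ring zify.
Import GRing.Theory.
Local Open Scope ring_scope.

Section Main.
Variable F : finFieldType.
Variables m n : nat.
Hypothesis hm : (0 < m)%N.
Hypothesis hn : odd n.
Hypothesis hF : #|F| = ((2 ^ m) ^ n)%N.

Lemma cardF : #|F| = (2 ^ (m * n))%N. Proof. by rewrite hF -expnM. Qed.
Lemma ch2 : 2 \in [pchar F].
Proof. exact: (card_finPcharP cardF). Qed.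

Lemma frob2 (x y : F) : (x + y) ^+ 2 = x ^+ 2 + y ^+ 2.
Proof. by rewrite sqrrD (mulrn_pchar ch2) addr0. Qed.

Lemma frobD k (x y : F) : (x + y) ^+ (2 ^ k) = x ^+ (2 ^ k) + y ^+ (2 ^ k).
Proof.
elim: k => [|k IH]; first by rewrite expn0 !expr1.
by rewrite expnSr !exprM IH frob2.
Qed.

Lemma frob_sum k (I : Type) (r : seq I) (P : pred I) (f : I -> F) :
  (\sum_(i <- r | P i) f i) ^+ (2 ^ k) = \sum_(i <- r | P i) f i ^+ (2 ^ k).
Proof.
apply: (big_morph (fun x => x ^+ (2^k))) => [x y|]; first exact: frobD.
by rewrite expr0n expn_eq0.
Qed.

Lemma xN (x : F) : x ^+ (2 ^ (m * n)) = x.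
Proof. by rewrite -cardF expf_card. Qed.

Lemma cyc s M (z : F) : (s * M)%N = (m * n)%N ->
  \sum_(i < M) (z ^+ (2 ^ s)) ^+ ((2 ^ s) ^ i) = \sum_(i < M) z ^+ ((2 ^ s) ^ i).
Proof.
case: M => [|M] hsM; first by rewrite !big_ord0.
have E : forall i, (z ^+ (2^s)) ^+ ((2^s)^i) = z ^+ ((2^s)^i.+1).
  by move=> i; rewrite -exprM expnS.
under eq_bigr do rewrite E.
rewrite [RHS]big_ord_recl [LHS]big_ord_recr /= addrC.
congr (_ + _).
by rewrite -expnM hsM xN expn0 expr1.
Qed.

Definition T2 (z : F) := \sum_(i < m * n) z ^+ (2 ^ i).
Local Notation Tr := (trq m n).

Lemma T2sq (z : F) : T2 (z ^+ 2) = T2 z.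
Proof. have := cyc 1 (m * n) z (mul1n _); rewrite expn1 => h; exact: h. Qed.

Lemma T2frob k (z : F) : T2 (z ^+ (2 ^ k)) = T2 z.
Proof. elim: k => [|k IH]; first by rewrite expn0 expr1. by rewrite expnSr exprM T2sq IH. Qed.

Lemma T2D (x y : F) : T2 (x + y) = T2 x + T2 y.
Proof. by rewrite /T2 -big_split; apply: eq_bigr => i _; rewrite frobD. Qed.

Lemma T20 : T2 0 = 0.
Proof. by rewrite /T2 big1 // => i _; rewrite expr0n expn_eq0. Qed.

Lemma T2_sum (I : Type) (r : seq I) (P : pred I) (f : I -> F) :
  T2 (\sum_(i <- r | P i) f i) = \sum_(i <- r | P i) T2 (f i).
Proof. exact: (big_morph T2 T2D T20). Qed.

Lemma TrD (x y : F) : Tr (x + y) = Tr x + Tr y.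
Proof. by rewrite /trq -big_split; apply: eq_bigr => i _; rewrite -expnM frobD. Qed.

Lemma Tr_frob (z : F) : Tr (z ^+ (2 ^ m)) = Tr z.
Proof. exact: (cyc m n z (erefl _)). Qed.

Lemma Trq (z : F) : (Tr z) ^+ (2 ^ m) = Tr z.
Proof.
rewrite /trq frob_sum -[RHS](cyc m n z (erefl _)).
by apply: eq_bigr => i _; rewrite -!exprM mulnC.
Qed.

Lemma fq_pow (c : F) i : c ^+ (2 ^ m) = c -> c ^+ ((2 ^ m) ^ i) = c.
Proof. move=> hc; elim: i => [|i IH]; first by rewrite expr1. by rewrite expnS exprM hc IH. Qed.

Lemma Tr_fq (c k : F) : c ^+ (2 ^ m) = c -> Tr (c * k) = c * Tr k.
Proof.
move=> hc; rewrite /trq mulr_sumr; apply: eq_bigr => i _.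
by rewrite exprMn (fq_pow c i hc).
Qed.

Lemma sum_mn (g : nat -> F) a b :
  \sum_(j < a * b) g j = \sum_(i < a) \sum_(k < b) g (i + a * k)%N.
Proof.
rewrite exchange_big /=; elim: b => [|b IH]; first by rewrite muln0 !big_ord0.
rewrite mulnSr big_split_ord IH big_ord_recr /=.
by congr (_ + _); apply: eq_bigr => i _; rewrite addnC.
Qed.

Lemma T2Tr (z : F) : T2 z = \sum_(i < m) (Tr z) ^+ (2 ^ i).
Proof.
rewrite /T2 (sum_mn (fun j => z ^+ (2 ^ j))); apply: eq_bigr => i _.
rewrite /trq frob_sum; apply: eq_bigr => k _.
by rewrite -exprM -expnM -expnD addnC.
Qed.

Lemma orth (c k : F) : c ^+ (2 ^ m) = c -> Tr k = 0 -> T2 (c * k) = 0.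
Proof.
move=> hc hk; rewrite T2Tr Tr_fq // hk mulr0 big1 // => i _.
by rewrite expr0n expn_eq0.
Qed.

Lemma Npos : (0 < m * n)%N.
Proof. by rewrite muln_gt0 hm; case: n hn. Qed.

Lemma T2nz : exists w, T2 w != 0.
Proof.
case: (pickP (fun w => T2 w != 0)) => [w hw|h0]; first by exists w.
exfalso.
pose P : {poly F} := \sum_(i < m * n) 'X^(2 ^ i).
have P0 : P = 0.
  apply: (roots_geq_poly_eq0 (rs := enum F)).
  - apply/allP => w _; rewrite /root /P horner_sum.
    rewrite (eq_bigr (fun i : 'I_(m * n) => w ^+ (2 ^ i))) => [|i _]; last exact: hornerXn.
    by have := h0 w; rewrite /= => /negbFE.
  - by rewrite enum_uniq.
  rewrite -cardE cardF.
  apply: leq_trans (size_sum _ _ _) _.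
  apply/bigmax_leqP => i _; rewrite size_polyXn.
  by rewrite ltn_exp2l.
have : P`_1 = 1.
  rewrite /P coef_sum.
  have Np := Npos; case E: (m * n)%N Np => [//|N'] _.
  rewrite big_ord_recl /= coefXn expn0 eqxx big1 ?addr0 // => i _.
  rewrite coefXn /= expnS.
  have : (0 < 2 ^ i)%N := expn_gt0 _ _.
  by case: (2 ^ i)%N => [|t] // _; rewrite mulnS.
by rewrite P0 coef0 => /eqP; rewrite eq_sym oner_eq0.
Qed.

Lemma nondeg (z : F) : z != 0 -> exists y, T2 (z * y) != 0.
Proof.
move=> hz; have [w hw] := T2nz; exists (w / z).
by rewrite mulrC divfK.
Qed.

Lemma lin2D (a : 'I_(m * n) -> F) x y : lin2 a (x + y) = lin2 a x + lin2 a y.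
Proof. by rewrite /lin2 -big_split; apply: eq_bigr => i _; rewrite frobD mulrDr. Qed.

Lemma lin20 (a : 'I_(m * n) -> F) : lin2 a 0 = 0.
Proof. by rewrite /lin2 big1 // => i _; rewrite expr0n expn_eq0 mulr0. Qed.

Lemma adj2D (a : 'I_(m * n) -> F) x y : adj2 a (x + y) = adj2 a x + adj2 a y.
Proof. by rewrite /adj2 -big_split; apply: eq_bigr => i _; rewrite mulrDr frobD. Qed.

Lemma adjoint (a : 'I_(m * n) -> F) x y : T2 (lin2 a x * y) = T2 (x * adj2 a y).
Proof.
rewrite /lin2 /adj2 mulr_suml mulr_sumr !T2_sum; apply: eq_bigr => j _.
rewrite -(T2frob (m * n - j)) !exprMn -exprM -expnD subnKC ?xN; last exact: ltnW.
by congr T2; ring.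
Qed.

Lemma addc (x : F) : x + x = 0.
Proof. exact: (addrr_pchar2 ch2). Qed.

Lemma Kperp (x : F) : (forall k, Tr k = 0 -> T2 (x * k) = 0) -> x ^+ (2 ^ m) = x.
Proof.
move=> h; apply/eqP; apply: contraT => hx.
have n1 : n = (n.-1).+1 by case: n hn.
pose u := x ^+ ((2 ^ m) ^ n.-1).
have uq : u ^+ (2 ^ m) = x by rewrite -exprM -expnSr -n1 -expnM xN.
have hz : u + x != 0.
  apply: contra hx => /eqP e.
  have eu : u = x by rewrite -[u]addr0 -(addc x) addrA e add0r.
  by rewrite -{1}eu uq.
have [y hy] := nondeg (u + x) hz.
have := h (y ^+ (2 ^ m) + y).
rewrite TrD Tr_frob addc => /(_ erefl).
have e1 : x * y ^+ (2 ^ m) = (u * y) ^+ (2 ^ m) by rewrite exprMn uq.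
rewrite mulrDr T2D e1 T2frob -T2D -mulrDl.
by move=> e; move: hy; rewrite e eqxx.
Qed.

Lemma C4 (c x : F) : c ^+ (2 ^ m) = c ->
  Tr ((x + c) ^+ (2 ^ m + 1)) = Tr (x ^+ (2 ^ m + 1)) + c ^+ 2.
Proof.
move=> hc.
rewrite exprD expr1 frobD hc mulrDl !mulrDr !TrD.
rewrite [x ^+ _ * c]mulrC (Tr_fq c (x ^+ (2 ^ m)) hc) (Tr_fq c x hc) Tr_frob.
have hc2 : (c * c) ^+ (2 ^ m) = c * c by rewrite exprMn hc.
rewrite -[c * c]mulr1 (Tr_fq _ 1 hc2).
have -> : Tr (1 : F) = 1.
  rewrite /trq (eq_bigr (fun _ : 'I_n => (1 : F))) => [|i _]; last by rewrite expr1n.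
  rewrite sumr_const card_ord -[n]odd_double_half hn -muln2 mulrnDr.
  by rewrite natrM (pcharf0 ch2) mulr0 addr0.
by rewrite mulr1 -addrA [c * _ + _]addrA addc add0r expr2 exprD expr1.
Qed.

Definition surjK (a : 'I_(m * n) -> F) :=
  forall k, Tr k = 0 -> exists2 k', Tr k' = 0 & k = adj2 a k'.

Lemma C1 a (hs : surjK a) z : (lin2 a z) ^+ (2 ^ m) = lin2 a z -> z ^+ (2 ^ m) = z.
Proof.
move=> hz; apply: Kperp => k hk; have [k' hk' ->] := hs k hk.
by rewrite -adjoint; exact: orth.
Qed.

Lemma C2 b (hs : surjK b) (hall : forall y, Tr (adj2 b y) = 0) d :
  (lin2 b d) ^+ (2 ^ m) = lin2 b d -> lin2 b d = 0.
Proof.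
move=> hc; apply/eqP; apply: contraT => hne.
have [y hy] := nondeg _ hne.
have [k hk e] := hs _ (hall y).
have : T2 (lin2 b d * y) = 0.
  rewrite (_ : y = k + (y + k)); last by rewrite addrCA addc addr0.
  by rewrite mulrDr T2D orth // add0r adjoint adj2D -e addc mulr0 T20.
by move=> h; move: hy; rewrite h eqxx.
Qed.

Lemma C3 b (hs : surjK b) d : lin2 b d = 0 -> d ^+ (2 ^ m) = d.
Proof.
move=> hd; apply: Kperp => k hk; have [k' _ ->] := hs k hk.
by rewrite -adjoint hd mul0r T20.
Qed.

Lemma gen_inj (G : F -> F) (GD : forall x y, G (x + y) = G x + G y)
  (hG : forall d, G d ^+ (2 ^ m) = G d -> G d = 0 /\ d ^+ (2 ^ m) = d) :
  injective (fun x => Tr (x ^+ (2 ^ m + 1)) + G x).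
Proof.
move=> x y /= h.
pose d := y - x.
have hy : y = x + d by rewrite /d addrC subrK.
rewrite hy GD in h.
have e : G d = Tr (x ^+ (2 ^ m + 1)) + Tr ((x + d) ^+ (2 ^ m + 1)).
  have -> : Tr (x ^+ (2 ^ m + 1)) = Tr ((x + d) ^+ (2 ^ m + 1)) + (G x + G d) - G x.
    by rewrite -h addrK.
  set A := Tr ((x + d) ^+ _); set B := G x; set C := G d.
  by rewrite (addrC B C) addrA addrK addrAC addc add0r.
have [h0 hd] : G d = 0 /\ d ^+ (2 ^ m) = d by apply: hG; rewrite e frobD !Trq.
move: e; rewrite h0 C4 // addrA addc add0r => /esym/eqP.
by rewrite sqrf_eq0 => /eqP d0; rewrite hy d0 addr0.
Qed.

Lemma main_sec (a b : 'I_(m * n) -> F) :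
  [set adj2 a x | x in kerTr m n] = kerTr (F := F) m n ->
  [set adj2 b x | x in kerTr m n] = kerTr (F := F) m n ->
  (forall x : F, trq m n (adj2 b x) = 0) ->
  bijective (fun x : F => trq m n (x ^+ (2 ^ m + 1)) + lin2 a (lin2 b x)) /\
  bijective (fun x : F => trq m n (x ^+ (2 ^ m + 1)) + lin2 b (lin2 a x)).
Proof.
have toS c (H : [set adj2 c x | x in kerTr m n] = kerTr (F := F) m n) : surjK c.
  move=> k hk; have : k \in kerTr m n by rewrite inE hk.
  rewrite -H => /imsetP [k' hk' ->]; exists k' => //.
  by move: hk'; rewrite inE => /eqP.
move=> /toS ha /toS hb hall; split; apply: injF_bij; apply: gen_inj.
- by move=> x y; rewrite !lin2D.
- move=> d hd.
  have h1 := C1 a ha _ hd.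
  have h2 := C2 b hb hall _ h1.
  by rewrite h2 lin20; split => //; exact: C3 b hb _ h2.
- by move=> x y; rewrite !lin2D.
- move=> d hd.
  have h2 := C2 b hb hall _ hd.
  have h1 := C3 b hb _ h2.
  by split => //; exact: C1 a ha _ h1.
Qed.
End Main.

Theorem mainTheorem8 (F : finFieldType) (m n : nat)
  (a b : 'I_(m * n) -> F) :
  (0 < m)%N -> odd n -> #|F| = ((2 ^ m) ^ n)%N ->
  [set adj2 a x | x in kerTr m n] = kerTr (F := F) m n ->
  [set adj2 b x | x in kerTr m n] = kerTr (F := F) m n ->
  (forall x : F, trq m n (adj2 b x) = 0) ->
  bijective (fun x : F => trq m n (x ^+ (2 ^ m + 1)) + lin2 a (lin2 b x)) /\
  bijective (fun x : F => trq m n (x ^+ (2 ^ m + 1)) + lin2 b (lin2 a x)).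
Proof. move=> hm hn hF; exact: main_sec. Qed.
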